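(* Let $(e_{m,n})_{m,n\in\mathbb N}$ be nonnegative random variables such that for each $n\in\mathbb N$, $(e_{m,n})_{m\in\mathbb N}$ is an asymptotic e-variable for $\mathcal P$. For $m,n\in\mathbb N$ set $\mathcal F_{m,n}=\sigma(e_{m,i}: i\le n)$ and $E_{m,n}=\prod_{i=0}^n e_{m,i}$. Assume that for every $m\in\mathbb N$ there is $d_m\ge 0$ with $$\mathbb E_P[e_{m,n+1}\mid\mathcal F_{m,n}]\le 1+d_m\quad P\text{-a.s., for all }P\in\mathcal P,\ n\in\mathbb N.$$ If $d_m\to0$ as $m\to\infty$, then $E$ has the asymptotic supermartingale property for $\mathcal F$ uniformly in $\mathcal P$; and in this case $E$ is an $r$-asymptotic e-process for $\mathcal P$ and $\mathcal F$ for every integer sequence $r=(r_m)_{m\in\mathbb N}\subset\mathbb N$ with $r_md_m\to0$ as $m\to\infty$.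
   Context: $(\Omega,\mathcal A)$ is a measurable space, $\mathcal P$ a set of probability measures on it, $\mathbb N=\{0,1,\dots\}$. Nonnegative random variables take values in $[0,\infty]$ with $\mathbb E_P[X]:=\infty$ if not $P$-integrable; $X_\infty:=\limsup_nX_n$. A sequence of nonnegative random variables $(e_m)_{m\in\mathbb N}$ is a (uniformly strongly) asymptotic e-variable for $\mathcal P$ if $\limsup_{m\to\infty}\sup_{P\in\mathcal P}\mathbb E_P[e_m]\le1$. For $P\in\mathcal P$, $\delta_{m,n}=\mathbb E_P[E_{m,n+1}\mid\mathcal F_{m,n}]-E_{m,n}$ if $E_{m,n+1}$ is $P$-integrable and $\delta_{m,n}=\infty$ otherwise; $x^+=\max\{x,0\}$; $E$ has the asymptotic supermartingale property if $\lim_m\sup_{P\in\mathcal P}\mathbb E_P[\delta^+_{m,n}]=0$ for every $n$. For a filtration $\mathcal G$ and $\rho\in\mathbb N\cup\{\infty\}$, $\mathcal T(\rho,\mathcal G,\mathcal P)$ is the set of $\mathcal G$-stopping times $\tau$ (values in $\mathbb N\cup\{\infty\}$) with $P[\tau\le\rho]=1$ for all $P\in\mathcal P$; $\mathcal T(r,\mathcal F,\mathcal P)$ is the set of sequences $(\tau_m)$ with $\tau_m\in\mathcal T(r_m,\mathcal F_{m,\bullet},\mathcal P)$. $E$ is an $r$-asymptotic e-process if for every $\tau\in\mathcal T(r,\mathcal F,\mathcal P)$, $\limsup_m\sup_{P\in\mathcal P}\mathbb E_P[E_{m,\tau_m}]\le1$. *)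

(* Defs.v *)
From HB Require Import structures.
From mathcomp Require Import all_boot all_order all_algebra.
From mathcomp Require Import all_classical all_reals all_analysis measurable_realfun.
Import Order.TTheory GRing.Theory Num.Theory.
Set Implicit Arguments.
Unset Strict Implicit.
Unset Printing Implicit Defensive.
Local Open Scope classical_set_scope.
Local Open Scope ring_scope.
Local Open Scope ereal_scope.

Definition G_measurable {d : measure_display} {T : measurableType d} {R : realType}
  (G : set (set T)) (g : T -> \bar R) : Prop :=
  forall B : set (\bar R), measurable B -> G (g @^-1` B).

(* g is a (version of the) conditional expectation E_P[X | G] of the
   nonnegative random variable X (generalized, [0,oo]-valued conditional
   expectation, which always exists and is a.s. unique). *)
Definition is_cond_exp {d : measure_display} {T : measurableType d} {R : realType}
  (P : probability T R) (G : set (set T)) (X g : T -> \bar R) : Prop :=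
  [/\ G_measurable G g, (forall x, 0 <= g x) &
      forall A, G A -> \int[P]_(x in A) X x = \int[P]_(x in A) g x].

Definition gen_filtration {d : measure_display} {T : measurableType d} {R : realType}
  (e : nat -> nat -> T -> \bar R) (m n : nat) : set (set T) :=
  <<s [set A | exists i, (i <= n)%N /\
        exists B : set (\bar R), measurable B /\ A = e m i @^-1` B] >>.

Definition prodE {d : measure_display} {T : measurableType d} {R : realType}
  (e : nat -> nat -> T -> \bar R) (m n : nat) (x : T) : \bar R :=
  \prod_(i < n.+1) e m i x.

(* (e_m) is an asymptotic e-variable: limsup_m sup_{P in Pset} E_P[e_m] <= 1,
   unfolded with epsilons. *)
Definition asymp_evar {d : measure_display} {T : measurableType d} {R : realType}
  (Pset : set (probability T R)) (f : nat -> T -> \bar R) : Prop :=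
  forall eps : R, (0 < eps)%R ->
    \forall m \near \oo, forall P, Pset P -> \int[P]_x f m x <= 1 + eps%:E.

(* E_P[delta_n^+] <= c, where delta_n = E_P[E_{n+1} | F_n] - E_n if E_{n+1}
   is P-integrable and delta_n = +oo otherwise. *)
Definition exp_delta_plus_le {d : measure_display} {T : measurableType d} {R : realType}
  (P : probability T R) (F : nat -> set (set T)) (E : nat -> T -> \bar R)
  (n : nat) (c : \bar R) : Prop :=
  P.-integrable setT (E n.+1) /\
  forall g, is_cond_exp P (F n) (E n.+1) g ->
    \int[P]_x maxe (g x - E n x) 0 <= c.

(* asymptotic supermartingale property: for every n,
   lim_m sup_{P in Pset} E_P[delta^+_{m,n}] = 0 (these are nonnegative). *)
Definition asymp_supermart {d : measure_display} {T : measurableType d} {R : realType}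
  (Pset : set (probability T R)) (F : nat -> nat -> set (set T))
  (E : nat -> nat -> T -> \bar R) : Prop :=
  forall (n : nat) (eps : R), (0 < eps)%R ->
    \forall m \near \oo, forall P, Pset P -> exp_delta_plus_le P (F m) (E m) n eps%:E.

(* stopping times with values in N u {oo}; None stands for oo *)
Definition stopping_time {d : measure_display} {T : measurableType d}
  (G : nat -> set (set T)) (tau : T -> option nat) : Prop :=
  forall n : nat, G n [set x | exists k, (k <= n)%N /\ tau x = Some k].

Definition bounded_by {d : measure_display} {T : measurableType d} {R : realType}
  (Pset : set (probability T R)) (tau : T -> option nat) (rho : nat) : Prop :=
  forall P, Pset P -> P [set x | exists k, (k <= rho)%N /\ tau x = Some k] = 1.

Definition stopped {d : measure_display} {T : measurableType d} {R : realType}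
  (E : nat -> T -> \bar R) (tau : T -> option nat) (x : T) : \bar R :=
  match tau x with Some k => E k x | None => limn_esup (fun n => E n x) end.

Definition r_asymp_eprocess {d : measure_display} {T : measurableType d} {R : realType}
  (Pset : set (probability T R)) (r : nat -> nat) (F : nat -> nat -> set (set T))
  (E : nat -> nat -> T -> \bar R) : Prop :=
  forall tau : nat -> T -> option nat,
    (forall m, stopping_time (F m) (tau m) /\ bounded_by Pset (tau m) (r m)) ->
    forall eps : R, (0 < eps)%R ->
      \forall m \near \oo, forall P, Pset P ->
        \int[P]_x stopped (E m) (tau m) x <= 1 + eps%:E.

(* Main.v *)
Require Import Defs.
From HB Require Import structures.
From mathcomp Require Import all_boot all_order all_algebra.
From mathcomp Require Import all_classical all_reals all_analysis measurable_realfun.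
From mathcomp Require Import ring lra.
Import Order.TTheory GRing.Theory Num.Theory.
Local Open Scope classical_set_scope.
Local Open Scope ring_scope.
Local Open Scope ereal_scope.


Section setup.
Context {d : measure_display} {T : measurableType d} {R : realType}.

Definition Gty (D : set (set T)) := g_sigma_algebraType (D `&` measurable).

Lemma Gty_measurable (D : set (set T)) (A : set (Gty D)) :
  measurable A -> d.-measurable (A : set T).
Proof.
move=> mA; apply: (smallest_sub (@sigma_algebra_measurable _ T)) mA.
by move=> B [].
Qed.
Arguments Gty_measurable {D A}.

Lemma GtyE (D : set (set T)) : (forall A, D A -> measurable A) ->
  (@measurable _ (Gty D)) = <<s D>>.
Proof.
by move=> hD; rewrite /= (_ : D `&` measurable = D)//; apply/setIidl => A /hD.
Qed.

Definition idG (D : set (set T)) : T -> Gty D := id.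

Lemma idG_meas D : measurable_fun setT (idG D).
Proof.
move=> _ A mA; rewrite setTI; exact: (Gty_measurable mA).
Qed.

HB.instance Definition _ D := isMeasurableFun.Build _ _ _ _ (idG D) (@idG_meas D).

Variable P : probability T R.

Definition muG D : probability (Gty D) R := distribution P (idG D).


Definition tr (X : T -> \bar R) (k : nat) (x : T) : \bar R :=
  if `[< measurable_fun setT X >] then mine (maxe (X x) 0) k%:R%:E else 0.

Lemma tr_ge0 X k x : 0 <= tr X k x.
Proof.
rewrite /tr; case: ifPn => _ //.
by rewrite le_min lee_fin ler0n andbT le_max lexx orbT.
Qed.

Lemma tr_le X k x : tr X k x <= k%:R%:E.
Proof. by rewrite /tr; case: ifPn => _; rewrite ?ge_min ?lexx ?orbT // lee_fin ler0n. Qed.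

Lemma tr_meas X k : measurable_fun setT (tr X k).
Proof.
rewrite /tr; case: asboolP => mX; last exact: measurable_cst.
by apply: measurable_mine => //; apply: measurable_maxe.
Qed.

Lemma trE X k x : measurable_fun setT X -> 0 <= X x ->
  tr X k x = mine (X x) k%:R%:E.
Proof.
by move=> mX X0; rewrite /tr; case: asboolP => // _; rewrite max_l.
Qed.

Lemma int_null (f : T -> \bar R) (A : set T) : measurable A ->
  measurable_fun setT f -> (forall x, 0 <= f x) -> P A = 0 ->
  \int[P]_(x in A) f x = 0.
Proof.
move=> mA mf f0 PA0.
rewrite -(integral_abs_eq0 (mu:=P) (f:=f) mA) //; last exact: measurable_funTS.
by apply: eq_integral => x _; rewrite gee0_abs.
Qed.

Lemma int_tr_fin X k A : measurable A -> \int[P]_(x in A) tr X k x \is a fin_num.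
Proof.
move=> mA; rewrite ge0_fin_numE; last by apply: integral_ge0 => x _; exact: tr_ge0.
apply: (@le_lt_trans _ _ (\int[P]_(x in A) (cst k%:R%:E) x)).
  apply: ge0_le_integral => //.
  - by move=> x _; exact: tr_ge0.
  - exact: measurable_funTS (tr_meas X k).
  - by move=> x _; exact: tr_le.
rewrite integral_cst//; apply: (@le_lt_trans _ _ (k%:R%:E * 1)).
  by apply: lee_wpmul2l; [rewrite lee_fin ler0n|exact: probability_le1].
by rewrite mule1 ltry.
Qed.

Definition nuT X k : set T -> \bar R := fun A => \int[P]_(x in A) tr X k x.

Let nuT0 X k : nuT X k set0 = 0.
Proof. by rewrite /nuT integral_set0. Qed.
Let nuT_ge0 X k A : 0 <= nuT X k A.
Proof. by apply: integral_ge0 => x _; exact: tr_ge0. Qed.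
Let nuT_sigma X k : semi_sigma_additive (nuT X k).
Proof. apply: semi_sigma_additive_nng_induced; [exact: tr_meas|exact: tr_ge0]. Qed.
HB.instance Definition _ X k := isMeasure.Build _ _ _ (nuT X k) (nuT0 X k) (nuT_ge0 X k) (@nuT_sigma X k).
Let nuT_fin X k : fin_num_fun (nuT X k).
Proof. by move=> A mA; exact: int_tr_fin. Qed.
HB.instance Definition _ X k := Measure_isFinite.Build _ _ _ (nuT X k) (nuT_fin X k).

Definition nuG D X k : set (Gty D) -> \bar R := fun A => \int[P]_(x in A) tr X k x.
Arguments nuG : clear implicits.

Let nuG0 D X k : nuG D X k set0 = 0.
Proof. by rewrite /nuG integral_set0. Qed.
Let nuG_ge0 D X k A : 0 <= nuG D X k A.
Proof. by apply: integral_ge0 => x _; exact: tr_ge0. Qed.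
Let nuG_sigma D X k : semi_sigma_additive (nuG D X k).
Proof.
move=> F mF tF mUF.
exact: (@nuT_sigma X k F (fun n => Gty_measurable (mF n)) tF (Gty_measurable mUF)).
Qed.
HB.instance Definition _ D X k := isMeasure.Build _ _ _ (nuG D X k) (@nuG0 D X k) (@nuG_ge0 D X k) (@nuG_sigma D X k).
Let nuG_fin D X k : fin_num_fun (nuG D X k).
Proof. by move=> A mA; apply: int_tr_fin; exact: Gty_measurable. Qed.
HB.instance Definition _ D X k := Measure_isFinite.Build _ _ _ (nuG D X k) (@nuG_fin D X k).

Lemma nuG_dom D X k : nuG D X k `<< muG D.
Proof.
move=> N N0 A mA AN; have := N0 A mA AN => /= PA0.
apply: int_null => //; [exact: Gty_measurable|exact: tr_meas|exact: tr_ge0].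
Qed.

Lemma nuT_dom X k : nuT X k `<< P.
Proof.
move=> N N0 A mA AN; have := N0 A mA AN => /= PA0.
apply: int_null => //; [exact: tr_meas|exact: tr_ge0].
Qed.


Definition fG D X k : T -> \bar R :=
  Radon_Nikodym_SigmaFinite.f (nuG D X k) (muG D).
Arguments fG : clear implicits.

Lemma fG_ge0 D X k x : 0 <= fG D X k x.
Proof. exact: (Radon_Nikodym_SigmaFinite.f_ge0 (nuG_dom D X k)). Qed.

Lemma fG_fin D X k x : fG D X k x \is a fin_num.
Proof. exact: (Radon_Nikodym_SigmaFinite.f_fin_num (nuG_dom D X k)). Qed.

Lemma fG_int D X k : (muG D).-integrable setT (fG D X k : Gty D -> \bar R).
Proof. exact: (Radon_Nikodym_SigmaFinite.f_integrable (nuG_dom D X k)). Qed.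

Lemma fG_meas D X k : measurable_fun setT (fG D X k : Gty D -> \bar R).
Proof. exact: measurable_int (fG_int D X k). Qed.

Lemma TR D (phi : T -> \bar R) (A : set (Gty D)) : measurable A ->
  measurable_fun setT (phi : Gty D -> \bar R) -> (forall x, 0 <= phi x) ->
  \int[muG D]_(x in A) phi x = \int[P]_(x in A) phi x.
Proof.
move=> mA mphi phi0.
have := @ge0_integral_pushforward _ _ T (Gty D) R (idG D) (@idG_meas D) P A
  phi mA (measurable_funTS mphi) (fun y _ => phi0 y).
by [].
Qed.

Lemma GtoT D (f : T -> \bar R) : measurable_fun setT (f : Gty D -> \bar R) ->
  measurable_fun setT f.
Proof.
move=> mf _ B mB; apply: Gty_measurable; exact: mf.
Qed.
Arguments GtoT {D f}.

Lemma fG_int_eq D X k (A : set (Gty D)) : measurable A ->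
  \int[P]_(x in A) fG D X k x = \int[P]_(x in A) tr X k x.
Proof.
move=> mA; rewrite -TR//; [|exact: fG_meas|exact: fG_ge0].
by rewrite -(Radon_Nikodym_SigmaFinite.f_integral (nuG_dom D X k)).
Qed.

Lemma tr_int X k : P.-integrable setT (tr X k).
Proof.
apply/integrableP; split; first exact: tr_meas.
rewrite (eq_integral (fun x => tr X k x)); last by move=> x _; rewrite gee0_abs// tr_ge0.
by rewrite -ge0_fin_numE ?int_tr_fin//; apply: integral_ge0 => x _; exact: tr_ge0.
Qed.

Lemma PO D X k (phi : T -> \bar R) (A : set (Gty D)) : measurable A ->
  measurable_fun setT (phi : Gty D -> \bar R) -> (forall x, 0 <= phi x) ->
  \int[P]_(x in A) (phi x * tr X k x) = \int[P]_(x in A) (phi x * fG D X k x).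
Proof.
move=> mA mphi phi0.
have mAT : measurable (A : set T) := Gty_measurable mA.
rewrite -(@TR D (fun x => phi x * fG D X k x) A mA); last 2 first.
  - by apply: emeasurable_funM => //; exact: fG_meas.
  - by move=> x; apply: mule_ge0 => //; exact: fG_ge0.
rewrite (Radon_Nikodym_SigmaFinite.change_of_variables (nuG_dom D X k))//; last exact: measurable_funTS.
have -> : \int[nuG D X k]_(x in A) phi x = \int[nuT X k]_(x in A) phi x.
  have := @ge0_integral_pushforward _ _ T (Gty D) R (idG D) (@idG_meas D) (nuT X k) A
    phi mA (measurable_funTS mphi) (fun y _ => phi0 y).
  by [].
pose fT := Radon_Nikodym_SigmaFinite.f (nuT X k) P.
have mphiT := GtoT mphi.
rewrite -(Radon_Nikodym_SigmaFinite.change_of_variables (nuT_dom X k))//; last exact: measurable_funTS.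
have hae : ae_eq P setT (tr X k) fT.
  apply: integral_ae_eq => //; first exact: tr_int.
    exact: measurable_int (Radon_Nikodym_SigmaFinite.f_integrable (nuT_dom X k)).
  move=> E _ mE.
  by rewrite -(Radon_Nikodym_SigmaFinite.f_integral (nuT_dom X k)).
apply: ae_eq_integral => //.
- by apply: emeasurable_funM; apply: measurable_funTS => //; exact: tr_meas.
- apply: emeasurable_funM; first exact: measurable_funTS.
  apply: measurable_funTS.
  exact: measurable_int (Radon_Nikodym_SigmaFinite.f_integrable (nuT_dom X k)).
- have := ae_eqe_mul2l phi hae; rewrite /ae_eq.
  by apply: filterS => x + Ax; apply.
Qed.


Lemma sub_GD (D : set (set T)) (A : set T) :
  (@measurable _ (Gty D)) A -> <<s D >> A.
Proof. by apply: sub_sigma_algebra2 => B []. Qed.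

Lemma sub_DG (D : set (set T)) (A : set T) : (forall B, D B -> measurable B) ->
  <<s D >> A -> (@measurable _ (Gty D)) A.
Proof. by move=> hD; apply: sub_sigma_algebra2 => B DB; split => //; exact: hD. Qed.
Arguments sub_DG {D A}.
Arguments sub_GD {D A}.

Lemma integral_fin_int (f : T -> \bar R) (A : set T) : measurable A ->
  P.-integrable A f -> \int[P]_(x in A) f x \is a fin_num.
Proof.
move=> mA /integrableP [mf fi]; rewrite fin_num_abs.
exact: le_lt_trans (le_abse_integral _ _ _) fi.
Qed.

Lemma fG_intP D X k : P.-integrable setT (fG D X k).
Proof.
apply/integrableP; split; first exact: (GtoT (fG_meas D X k)).
rewrite (eq_integral (fun x => fG D X k x)); last by move=> x _; rewrite gee0_abs// fG_ge0.
rewrite (fG_int_eq D X k setT (@measurableT _ (Gty D))).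
by rewrite -ge0_fin_numE ?int_tr_fin//; apply: integral_ge0 => x _; exact: tr_ge0.
Qed.

Lemma AE_LE D (u v : T -> \bar R) :
  measurable_fun setT (u : Gty D -> \bar R) -> measurable_fun setT (v : Gty D -> \bar R) ->
  P.-integrable setT u -> P.-integrable setT v ->
  (forall x, u x \is a fin_num) -> (forall x, v x \is a fin_num) ->
  (forall A : set (Gty D), measurable A -> \int[P]_(x in A) u x <= \int[P]_(x in A) v x) ->
  {ae P, forall x, u x <= v x}.
Proof.
move=> mu mv iu iv fu fv hle.
have mBG : (@measurable _ (Gty D)) (setT `&` [set x | v x < u x]) by exact: measurable_lte.
rewrite setTI in mBG.
set B := [set x | v x < u x] in mBG *.
have mB : measurable (B : set T) := Gty_measurable mBG.
have iuB : P.-integrable B u by exact: integrableS iu.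
have ivB : P.-integrable B v by exact: integrableS iv.
have hw : \int[P]_(x in B) (u x - v x) = 0.
  apply/eqP; rewrite eq_le; apply/andP; split.
    rewrite integralB// sube_le0; exact: hle.
  by apply: integral_ge0 => x Bx; rewrite sube_ge0 ?fv//; apply: ltW; exact: Bx.
have habs : \int[P]_(x in B) `|u x - v x| = 0.
  rewrite -hw; apply: eq_integral => x; rewrite inE => Bx.
  by rewrite gee0_abs// sube_ge0 ?fv//; apply: ltW; exact: Bx.
have mw : measurable_fun B (fun x => u x - v x).
  by apply: measurable_funTS; apply: emeasurable_funB; [exact: GtoT mu|exact: GtoT mv].
have [N [mN N0 hN]] := (@ae_eq_integral_abs _ _ _ P B mB _ mw).1 habs.
exists N; split => // x /= hx; apply: hN => /=.
have vu : v x < u x by rewrite ltNge; apply/negP.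
apply/not_implyP; split; first exact: vu.
by move/eqP; rewrite /cst gt_eqF// sube_gt0.
Qed.

End setup.
Arguments sub_DG {d T D A}.
Arguments sub_GD {d T D A}.
Arguments GtoT {d T R D f}.
Arguments Gty_measurable {d T D A}.



Section lim.
Context (R : realType).

Lemma lim_mine (a b : \bar R) : 0 <= a -> 0 <= b ->
  (fun k : nat => a * mine b k%:R%:E) @ \oo --> a * b.
Proof.
move=> a0; case: b => [r r0|_|//].
- apply: cvg_near_cst; near=> k; rewrite min_l// lee_fin.
  near: k; exact: nbhs_infty_ger.
- rewrite (_ : (fun k : nat => a * mine +oo k%:R%:E) = fun k : nat => a * k%:R%:E); last first.
    by apply/funext => k; rewrite min_r// leey.
  move: a0; case: a => [s|_|//] s0.
  + have [->|sn0] := eqVneq s 0%R.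
      rewrite mul0e; apply: cvg_near_cst; near=> k; by rewrite mul0e.
    have sp : (0 < s)%R by rewrite lt_neqAle eq_sym sn0 -lee_fin.
    rewrite mulry gtr0_sg// mul1e; apply/cvgeyPge => A; near=> k.
    rewrite -EFinM lee_fin.
    have -> : A = ((A / s) * s)%R by rewrite divfK// gt_eqF.
    rewrite [(s * _)%R]mulrC ler_pM2r//.
    near: k; exact: nbhs_infty_ger.
  + rewrite mulyy; apply: cvg_near_cst; near=> k.
    rewrite mulyr gtr0_sg ?mul1e//.
    have : (1 <= k%:R :> R)%R by near: k; exact: nbhs_infty_ger.
    by apply: lt_le_trans.
Unshelve. all: by end_near.
Qed.

End lim.

Section condexp.
Context {d : measure_display} {T : measurableType d} {R : realType}.
Variable P : probability T R.

Fixpoint Hk D X k x : \bar R :=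
  match k with 0%N => fG P D X 0 x | k'.+1 => maxe (Hk D X k' x) (fG P D X k'.+1 x) end.
Definition Hs D X x : \bar R := ereal_sup (range (fun k => Hk D X k x)).

Lemma Hk_S D X k x : Hk D X k.+1 x = maxe (Hk D X k x) (fG P D X k.+1 x).
Proof. by []. Qed.

Lemma Hk_0 D X x : Hk D X 0 x = fG P D X 0 x.
Proof. by []. Qed.

Lemma Hk_ge0 D X k x : 0 <= Hk D X k x.
Proof. by case: k => [|k]; rewrite ?Hk_0 ?Hk_S ?fG_ge0// le_max fG_ge0 orbT. Qed.

Lemma fG_le_Hk D X k x : fG P D X k x <= Hk D X k x.
Proof. by case: k => [|k]; rewrite ?Hk_0// Hk_S le_max lexx orbT. Qed.

Lemma Hk_nd D X x : {homo (fun k => Hk D X k x) : n m / (n <= m)%N >-> n <= m}.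
Proof. by apply/nondecreasing_seqP => k; rewrite Hk_S le_max lexx. Qed.

Lemma Hk_meas D X k : measurable_fun setT (Hk D X k : Gty D -> \bar R).
Proof.
elim: k => [|k ih].
  by rewrite (_ : Hk D X 0 = fG P D X 0); [exact: fG_meas|apply/funext => x; exact: Hk_0].
rewrite (_ : Hk D X k.+1 = fun x => maxe (Hk D X k x) (fG P D X k.+1 x)); last first.
  by apply/funext => x; exact: Hk_S.
by apply: measurable_maxe => //; exact: fG_meas.
Qed.

Lemma Hk_cvg D X x : (fun k => Hk D X k x) @ \oo --> Hs D X x.
Proof. exact/ereal_nondecreasing_cvgn/Hk_nd. Qed.

Lemma Hk_le_Hs D X k x : Hk D X k x <= Hs D X x.
Proof. by apply: ereal_sup_ubound; exists k. Qed.

Lemma Hs_meas D X : measurable_fun setT (Hs D X : Gty D -> \bar R).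
Proof.
apply: (@emeasurable_fun_cvg _ (Gty D) R setT (fun k => Hk D X k : Gty D -> \bar R)); first by move=> k; exact: Hk_meas.
by move=> x _; exact: Hk_cvg.
Qed.

Lemma tr_nd (X : T -> \bar R) x : {homo (fun k => tr X k x) : n m / (n <= m)%N >-> n <= m}.
Proof.
apply/nondecreasing_seqP => k; rewrite /tr; case: ifPn => _ //.
by rewrite le_min ge_min lexx /= ge_min lee_fin ler_nat leqnSn orbT.
Qed.

Lemma fG_nd_ae D X k : {ae P, forall x, fG P D X k x <= fG P D X k.+1 x}.
Proof.
apply: AE_LE; [exact: fG_meas|exact: fG_meas|exact: fG_intP|exact: fG_intP|exact: fG_fin|exact: fG_fin|].
move=> A mA; rewrite !fG_int_eq//.
apply: ge0_le_integral; first exact: Gty_measurable.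
- by move=> x _; exact: tr_ge0.
- exact: measurable_funTS (tr_meas X k).
- exact: measurable_funTS (tr_meas X k.+1).
- by move=> x _; exact: tr_nd.
Qed.

Lemma Hk_ae D X k : {ae P, forall x, Hk D X k x = fG P D X k x}.
Proof.
elim: k => [|k ih]; first by apply: nearW => x; exact: Hk_0.
apply: filterS2 ih (fG_nd_ae D X k) => x h1 h2.
by rewrite Hk_S h1 max_r.
Qed.

Lemma Hs_condexp D X : (forall B, D B -> measurable B) ->
  measurable_fun setT X -> (forall x, 0 <= X x) ->
  is_cond_exp P <<s D >> X (Hs D X).
Proof.
move=> hD mX X0; split.
- move=> B mB; apply: sub_GD; have := Hs_meas D X (@measurableT _ (Gty D)) B mB.
  by rewrite setTI.
- by move=> x; exact: le_trans (Hk_ge0 D X 0 x) (Hk_le_Hs D X 0 x).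
move=> A hA.
have mAG := sub_DG hD hA.
have mA : measurable A := Gty_measurable mAG.
have -> : \int[P]_(x in A) Hs D X x = limn (fun k => \int[P]_(x in A) Hk D X k x).
  rewrite -monotone_convergence//.
  - by apply: eq_integral => x _; apply/esym/cvg_lim => //; exact: Hk_cvg.
  - by move=> k; apply: measurable_funTS; exact: (GtoT (Hk_meas D X k)).
  - by move=> k x _; exact: Hk_ge0.
  - by move=> x _; exact: Hk_nd.
have -> : \int[P]_(x in A) X x = limn (fun k => \int[P]_(x in A) tr X k x).
  rewrite -monotone_convergence//.
  - apply: eq_integral => x _; apply/esym/cvg_lim => //.
    rewrite (_ : (fun k => tr X k x) = fun k : nat => 1 * mine (X x) k%:R%:E).
      by have := @lim_mine R 1 (X x) lee01 (X0 x); rewrite mul1e.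
    by apply/funext => k; rewrite mul1e trE.
  - by move=> k; apply: measurable_funTS; exact: tr_meas.
  - by move=> k x _; exact: tr_ge0.
  - by move=> x _; exact: tr_nd.
congr (limn _); apply/funext => k.
rewrite -(fG_int_eq P D X k A mAG); apply/esym/ae_eq_integral => //.
- exact: measurable_funTS (GtoT (Hk_meas D X k)).
- exact: measurable_funTS (GtoT (fG_meas P D X k)).
- by apply: filterS (Hk_ae D X k) => x + _.
Qed.

End condexp.

Section KL.
Context {d : measure_display} {T : measurableType d} {R : realType}.
Variable P : probability T R.

Lemma KL D X (c : R) : (forall B, D B -> measurable B) ->
  measurable_fun setT X -> (forall x, 0 <= X x) -> (0 <= c)%R ->
  (forall g, is_cond_exp P <<s D >> X g -> {ae P, forall x, g x <= c%:E}) ->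
  forall (A : set T) (phi : T -> \bar R), <<s D >> A ->
  measurable_fun setT (phi : Gty D -> \bar R) -> (forall x, 0 <= phi x) ->
  \int[P]_(x in A) (phi x * X x) <= c%:E * \int[P]_(x in A) phi x.
Proof.
move=> hD mX X0 c0 hyp A phi hA mphi phi0.
have hc := hyp _ (Hs_condexp P D X hD mX X0).
have mAG := sub_DG hD hA.
have mA : measurable A := Gty_measurable mAG.
have mphiT := GtoT mphi.
have step k : \int[P]_(x in A) (phi x * tr X k x) <= c%:E * \int[P]_(x in A) phi x.
  have eZ : \int[P]_(x in A) (c%:E * phi x) = c%:E * \int[P]_(x in A) phi x.
    apply: ge0_integralZl => //; try exact: measurable_funTS; by rewrite lee_fin.
  rewrite (PO P D X k phi A mAG mphi phi0) -eZ.
  apply: ae_ge0_le_integral => //.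
  - by move=> x _; apply: mule_ge0 => //; exact: fG_ge0.
  - apply: emeasurable_funM; first exact: measurable_funTS.
    exact: measurable_funTS (GtoT (fG_meas P D X k)).
  - by move=> x _; apply: mule_ge0 => //; rewrite lee_fin.
  - by apply: emeasurable_funM => //; exact: measurable_funTS.
  - apply: filterS hc => x hx _; rewrite [c%:E * _]muleC; apply: lee_wpmul2l => //.
    exact: le_trans (fG_le_Hk P D X k x) (le_trans (Hk_le_Hs P D X k x) hx).
have -> : \int[P]_(x in A) (phi x * X x) =
    limn (fun k => \int[P]_(x in A) (phi x * tr X k x)).
  rewrite -monotone_convergence//.
  - apply: eq_integral => x _; apply/esym/cvg_lim => //.
    rewrite (_ : (fun k => phi x * tr X k x) = fun k : nat => phi x * mine (X x) k%:R%:E).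
      exact: lim_mine.
    by apply/funext => k; rewrite trE.
  - by move=> k; apply: emeasurable_funM; apply: measurable_funTS => //; exact: tr_meas.
  - by move=> k x _; apply: mule_ge0 => //; exact: tr_ge0.
  - by move=> x _ n m nm; apply: lee_wpmul2l => //; exact: tr_nd.
apply: lime_le.
  apply: ereal_nondecreasing_is_cvgn => n m nm.
  apply: ge0_le_integral => //.
  - by move=> x _; apply: mule_ge0 => //; exact: tr_ge0.
  - by apply: emeasurable_funM; apply: measurable_funTS => //; exact: tr_meas.
  - by apply: emeasurable_funM; apply: measurable_funTS => //; exact: tr_meas.
  - by move=> x _; apply: lee_wpmul2l => //; exact: tr_nd.
by apply: nearW => k; exact: step.
Qed.

End KL.


Lemma arith_sub {R : realType} (x a : \bar R) (dd : R) : a \is a fin_num ->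
  x <= (1 + dd)%:E * a -> x - a <= dd%:E * a.
Proof.
move=> fa; rewrite -(fineK fa); set a' := fine a.
case: x => [r| |] h //.
- rewrite -EFinM lee_fin in h; rewrite -EFinB -EFinM lee_fin.
  rewrite mulrDl mul1r in h; lra.
- by rewrite leNye.
Qed.

Section main.
Context {d : measure_display} {T : measurableType d} {R : realType}.
Context (e : nat -> nat -> T -> \bar R) (dm : nat -> R).
Context (me : forall m n, measurable_fun setT (e m n))
        (e0 : forall m n x, 0 <= e m n x) (dm0 : forall m, (0 <= dm m)%R).

Definition Dg m j : set (set T) := [set A | exists i, (i <= j)%N /\
  exists B : set (\bar R), measurable B /\ A = e m i @^-1` B].

Lemma hDg m j : forall A, Dg m j A -> measurable A.
Proof.
move=> A [i [_ [B [mB ->]]]].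
by have := me m i measurableT B mB; rewrite setTI.
Qed.

Lemma meas_mono m j j' (f : T -> \bar R) : (j <= j')%N ->
  measurable_fun setT (f : Gty (Dg m j) -> \bar R) ->
  measurable_fun setT (f : Gty (Dg m j') -> \bar R).
Proof.
move=> jj' mf _ B mB; have := mf measurableT B mB.
apply: sub_sigma_algebra2 => A [[i [ij hB]] mA]; split => //.
by exists i; split => //; exact: leq_trans ij jj'.
Qed.

Lemma e_measG m i j : (i <= j)%N -> measurable_fun setT (e m i : Gty (Dg m j) -> \bar R).
Proof.
move=> ij _ B mB; rewrite setTI; apply: sub_gen_smallest; split.
  by exists i; split => //; exists B.
by have := me m i measurableT B mB; rewrite setTI.
Qed.

Lemma prodE_S m j x : prodE e m j.+1 x = prodE e m j x * e m j.+1 x.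
Proof. by rewrite /prodE big_ord_recr. Qed.

Lemma prodE_0 m x : prodE e m 0 x = e m 0 x.
Proof. by rewrite /prodE big_ord1. Qed.

Lemma prodE_ge0 m j x : 0 <= prodE e m j x.
Proof.
by elim: j => [|j ih]; rewrite ?prodE_0 ?prodE_S ?e0//; apply: mule_ge0.
Qed.

Lemma prodE_measG m j : measurable_fun setT (prodE e m j : Gty (Dg m j) -> \bar R).
Proof.
elim: j => [|j ih].
  by rewrite (_ : prodE e m 0 = e m 0); [exact: e_measG|apply/funext => x; exact: prodE_0].
rewrite (_ : prodE e m j.+1 = fun x => prodE e m j x * e m j.+1 x); last first.
  by apply/funext => x; exact: prodE_S.
apply: emeasurable_funM; first exact: (meas_mono m j j.+1 _ (leqnSn j) ih).
exact: (e_measG m j.+1 j.+1 (leqnn _)).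
Qed.

Lemma prodE_meas m j : measurable_fun setT (prodE e m j).
Proof. exact: (@GtoT _ _ _ (Dg m j) (prodE e m j) (prodE_measG m j)). Qed.

Context (P : probability T R).
Context (HP : forall m n g, is_cond_exp P (gen_filtration e m n) (e m n.+1) g ->
  {ae P, forall x, g x <= 1 + (dm m)%:E}).

Lemma key m j (A : set T) (phi : T -> \bar R) : <<s Dg m j >> A ->
  measurable_fun setT (phi : Gty (Dg m j) -> \bar R) -> (forall x, 0 <= phi x) ->
  \int[P]_(x in A) (phi x * e m j.+1 x) <= (1 + dm m)%:E * \int[P]_(x in A) phi x.
Proof.
move=> hA mphi phi0.
have c0 : (0 <= 1 + dm m)%R by rewrite addr_ge0.
have hyp : forall g, is_cond_exp P <<s Dg m j >> (e m j.+1) g ->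
    {ae P, forall x, g x <= (1 + dm m)%:E}.
  move=> g hg; rewrite EFinD; exact: (HP m j g hg).
exact: (KL P (Dg m j) (e m j.+1) (1 + dm m)%R (@hDg m j) (me m j.+1) (e0 m j.+1) c0 hyp A phi hA mphi phi0).
Qed.

Lemma intE m j : \int[P]_x prodE e m j x <= ((1 + dm m) ^+ j)%:E * \int[P]_x e m 0 x.
Proof.
elim: j => [|j ih].
  rewrite expr0 mul1e; apply: ge0_le_integral => //.
  - by move=> x _; exact: prodE_ge0.
  - exact: prodE_meas.
  - by move=> x _; rewrite prodE_0.
under eq_integral do rewrite prodE_S.
have hT : <<s Dg m j >> setT := sub_GD (@measurableT _ (Gty (Dg m j))).
apply: le_trans (key m j setT (prodE e m j) hT (prodE_measG m j) (prodE_ge0 m j)) _.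
apply: le_trans (lee_wpmul2l _ ih) _; first by rewrite lee_fin addr_ge0.
by rewrite muleA -EFinM exprS.
Qed.

End main.


Section main2.
Context {d : measure_display} {T : measurableType d} {R : realType}.
Context (e : nat -> nat -> T -> \bar R) (dm : nat -> R).
Context (me : forall m n, measurable_fun setT (e m n))
        (e0 : forall m n x, 0 <= e m n x) (dm0 : forall m, (0 <= dm m)%R).
Context (P : probability T R).
Context (HP : forall m n g, is_cond_exp P (gen_filtration e m n) (e m n.+1) g ->
  {ae P, forall x, g x <= 1 + (dm m)%:E}).

Local Notation keyL := (key e dm me e0 dm0 P HP).
Local Notation intEL := (intE e dm me e0 dm0 P HP).
Local Notation Dg := (Dg e).

Lemma prodE_int_bound m j : (dm m <= 1)%R -> \int[P]_x e m 0 x <= 2%:E ->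
  \int[P]_x prodE e m j x <= (2 ^+ j * 2)%:E.
Proof.
move=> d1 I2; apply: le_trans (intEL m j) _.
apply: le_trans (lee_wpmul2l _ I2) _; first by rewrite lee_fin exprn_ge0// addr_ge0.
rewrite -EFinM lee_fin ler_wpM2r// lerXn2r// ?nnegrE ?addr_ge0//.
by rewrite (_ : 2 = 1 + 1)%R //; rewrite lerD2l.
Qed.

Lemma prodE_int m j : (dm m <= 1)%R -> \int[P]_x e m 0 x <= 2%:E ->
  P.-integrable setT (prodE e m j).
Proof.
move=> d1 I2; apply/integrableP; split; first exact: prodE_meas.
rewrite (eq_integral (fun x => prodE e m j x)); last by move=> x _; rewrite gee0_abs// prodE_ge0.
exact: le_lt_trans (prodE_int_bound m j d1 I2) (ltry _).
Qed.

Lemma part1 m n (eps : R) : (dm m <= 1)%R -> \int[P]_x e m 0 x <= 2%:E ->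
  (dm m * (2 ^+ n * 2) <= eps)%R ->
  exp_delta_plus_le P (gen_filtration e m) (prodE e m) n eps%:E.
Proof.
move=> d1 I2 deps; split; first exact: prodE_int m n.+1 d1 I2.
move=> g [gm g0 gint].
have mgG : measurable_fun setT (g : Gty (Dg m n) -> \bar R).
  move=> _ B mB; rewrite setTI; apply: (sub_DG (hDg e me m n)); exact: gm B mB.
have mgT := @GtoT _ _ _ (Dg m n) g mgG.
have mEG := prodE_measG e me m n.
have mBG : (@measurable _ (Gty (Dg m n))) [set x | prodE e m n x < g x].
  by rewrite -[X in measurable X]setTI; exact: measurable_lte.
set B := [set x | prodE e m n x < g x] in mBG.
have hB : <<s Dg m n >> B := sub_GD mBG.
have mB : measurable (B : set T) := Gty_measurable mBG.
have hT : <<s Dg m n >> setT := sub_GD (@measurableT _ (Gty (Dg m n))).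
have ig : P.-integrable setT g.
  apply/integrableP; split => //.
  rewrite (eq_integral (fun x => g x)); last by move=> x _; rewrite gee0_abs.
  rewrite -(gint setT hT).
  rewrite (eq_integral (fun x => `|prodE e m n.+1 x|)); last by move=> x _; rewrite gee0_abs// prodE_ge0.
  by move/integrableP : (prodE_int m n.+1 d1 I2) => [].
have -> : \int[P]_x maxe (g x - prodE e m n x) 0 =
    \int[P]_(x in B) (g x - prodE e m n x).
  rewrite [RHS]integral_mkcond; apply: eq_integral => x _; rewrite patchE.
  case: ifPn => [/set_mem xB|xB].
    by rewrite max_l// ltW// sube_gt0.
  rewrite max_r// sube_le0 leNgt; apply/negP => xB'; move/negP: xB; apply.
  exact/mem_set.
rewrite integralB//; [|exact: integrableS ig|exact: integrableS (prodE_int m n d1 I2)].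
have h2 : \int[P]_(x in B) g x <= (1 + dm m)%:E * \int[P]_(x in B) prodE e m n x.
  rewrite -(gint B hB).
  under eq_integral do rewrite prodE_S.
  exact: keyL m n B (prodE e m n) hB mEG (prodE_ge0 e e0 m n).
have finB : \int[P]_(x in B) prodE e m n x \is a fin_num.
  apply: integral_fin_int => //; exact: integrableS (prodE_int m n d1 I2).
apply: le_trans (arith_sub _ _ _ finB h2) _.
apply: le_trans (_ : (dm m)%:E * \int[P]_x prodE e m n x <= _).
  apply: lee_wpmul2l; first by rewrite lee_fin.
  apply: ge0_subset_integral => //; first exact: prodE_meas.
  by move=> x _; exact: prodE_ge0.
apply: le_trans (lee_wpmul2l _ (prodE_int_bound m n d1 I2)) _; first by rewrite lee_fin.
by rewrite -EFinM lee_fin.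
Qed.

End main2.


Section main3.
Context {d : measure_display} {T : measurableType d} {R : realType}.
Context (e : nat -> nat -> T -> \bar R) (dm : nat -> R).
Context (me : forall m n, measurable_fun setT (e m n))
        (e0 : forall m n x, 0 <= e m n x) (dm0 : forall m, (0 <= dm m)%R).
Context (P : probability T R).
Context (HP : forall m n g, is_cond_exp P (gen_filtration e m n) (e m n.+1) g ->
  {ae P, forall x, g x <= 1 + (dm m)%:E}).

Local Notation keyL := (key e dm me e0 dm0 P HP).
Local Notation Dg := (Dg e).
Local Notation E := (prodE e).

Definition Sst m (tau : T -> option nat) j x : \bar R :=
  match tau x with
  | Some k => if (k <= j)%N then E m k x else E m j x
  | None => E m j x end.

Definition Ast (tau : T -> option nat) j := [set x | exists k, (k <= j)%N /\ tau x = Some k].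

Lemma Sst_in m tau j x : Ast tau j x -> Sst m tau j.+1 x = Sst m tau j x.
Proof.
move=> [k [kj tk]]; rewrite /Sst tk kj.
by rewrite (leq_trans kj (leqnSn j)).
Qed.

Lemma Sst_out m tau j x : ~ Ast tau j x ->
  Sst m tau j.+1 x = E m j.+1 x /\ Sst m tau j x = E m j x.
Proof.
rewrite /Sst /Ast /=; case: (tau x) => [k|] hA //.
have kj : ~~ (k <= j)%N by apply/negP => kj; apply: hA; exists k.
rewrite (negbTE kj); split => //.
case: ifPn => // kj1.
by have -> : k = j.+1 by apply/eqP; rewrite eqn_leq kj1 ltnNge.
Qed.

Lemma Sst_0 m tau x : Sst m tau 0 x = e m 0 x.
Proof.
rewrite /Sst; case: (tau x) => [k|]; last exact: prodE_0.
by case: ifPn => [|_]; [rewrite leqn0 => /eqP ->|]; exact: prodE_0.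
Qed.

Lemma Sst_ge0 m tau j x : 0 <= Sst m tau j x.
Proof. by rewrite /Sst; case: (tau x) => [k|]; try case: ifPn; move=> *; exact: prodE_ge0. Qed.

Lemma Dg_mono m j j' : (j <= j')%N -> <<s Dg m j >> `<=` <<s Dg m j' >>.
Proof.
move=> jj'; apply: sub_sigma_algebra2 => A [i [ij hB]].
by exists i; split => //; exact: leq_trans ij jj'.
Qed.

Section tau.
Variables (m : nat) (tau : T -> option nat).
Hypothesis st : stopping_time (gen_filtration e m) tau.

Lemma Ast_G j : <<s Dg m j >> (Ast tau j).
Proof. exact: st j. Qed.

Lemma Ast_meas j : measurable (Ast tau j).
Proof. exact: Gty_measurable (sub_DG (hDg e me m j) (Ast_G j)). Qed.

Lemma Sst_rep j x : Sst m tau j.+1 x =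
  Sst m tau j x * (\1_(Ast tau j) x)%:E + E m j.+1 x * (\1_(~` Ast tau j) x)%:E.
Proof.
rewrite !indicE; case: (boolP (x \in Ast tau j)) => xA.
  rewrite in_setC xA /= mule1 mule0 adde0; apply: (Sst_in m tau j x); exact: set_mem.
rewrite in_setC xA /= mule1 mule0 add0e.
by have [-> _] := Sst_out m tau j x (fun h => (negP xA) (mem_set h)).
Qed.

Lemma Sst_meas j : measurable_fun setT (Sst m tau j).
Proof.
elim: j => [|j ih].
  by rewrite (_ : Sst m tau 0 = e m 0) //; apply/funext => x; exact: Sst_0.
rewrite (_ : Sst m tau j.+1 = fun x => Sst m tau j x * (\1_(Ast tau j) x)%:E +
   E m j.+1 x * (\1_(~` Ast tau j) x)%:E); last by apply/funext => x; exact: Sst_rep.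
apply: emeasurable_funD; apply: emeasurable_funM => //.
- by apply/measurable_EFinP; apply: measurable_indic; exact: Ast_meas.
- exact: prodE_meas.
- by apply/measurable_EFinP; apply: measurable_indic; apply: measurableC; exact: Ast_meas.
Qed.

Lemma Sst_step j : \int[P]_x Sst m tau j.+1 x <= (1 + dm m)%:E * \int[P]_x Sst m tau j x.
Proof.
set A := Ast tau j.
have mA : measurable A := Ast_meas j.
have mAc : measurable (~` A) := measurableC mA.
have dis : [disjoint A & ~` A] by rewrite /disj_set setICr.
have split_int (f : T -> \bar R) : measurable_fun setT f -> (forall x, 0 <= f x) ->
    \int[P]_x f x = \int[P]_(x in A) f x + \int[P]_(x in ~` A) f x.
  move=> mf f0; rewrite -ge0_integral_setU//; last by rewrite setUCr.
  by rewrite setUCr.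
rewrite (split_int _ (Sst_meas j.+1) (Sst_ge0 m tau j.+1)).
rewrite (split_int _ (Sst_meas j) (Sst_ge0 m tau j)).
have c0 : 0 <= (1 + dm m)%:E by rewrite lee_fin addr_ge0.
rewrite muleDr ?ge0_adde_def ?inE ?integral_ge0//; last first.
  by move=> x _; exact: Sst_ge0.
  by move=> x _; exact: Sst_ge0.
apply: leeD.
  rewrite (eq_integral (Sst m tau j)); last by move=> x; rewrite inE => xA; exact: (Sst_in m tau j x xA).
  apply: lee_pemull; first by apply: integral_ge0 => x _; exact: Sst_ge0.
  by rewrite lee_fin lerDl.
have -> : \int[P]_(x in ~` A) Sst m tau j.+1 x = \int[P]_(x in ~` A) (E m j x * e m j.+1 x).
  apply: eq_integral => x; rewrite inE => xA.
  by have [-> _] := Sst_out m tau j x xA; rewrite prodE_S.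
have -> : \int[P]_(x in ~` A) Sst m tau j x = \int[P]_(x in ~` A) E m j x.
  apply: eq_integral => x; rewrite inE => xA.
  by have [_ ->] := Sst_out m tau j x xA.
apply: keyL => //.
- by apply: sigma_algebraC; exact: Ast_G.
- exact: prodE_measG.
- by move=> x; exact: prodE_ge0.
Qed.

Lemma Sst_bound j : \int[P]_x Sst m tau j x <= ((1 + dm m) ^+ j)%:E * \int[P]_x e m 0 x.
Proof.
elim: j => [|j ih].
  rewrite expr0 mul1e; apply: ge0_le_integral => //.
  - by move=> x _; exact: Sst_ge0.
  - exact: Sst_meas.
  - by move=> x _; rewrite Sst_0.
apply: le_trans (Sst_step j) _.
apply: le_trans (lee_wpmul2l _ ih) _; first by rewrite lee_fin addr_ge0.
by rewrite muleA -EFinM exprS.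
Qed.

Lemma limn_esup_ge0 (u : (\bar R)^nat) : (forall n, 0 <= u n) -> 0 <= limn_esup u.
Proof.
move=> u0; rewrite limn_esup_lim; apply: lime_ge; first exact: is_cvg_esups.
apply: nearW => n; apply: le_trans (u0 n) _.
by apply: ereal_sup_ubound; exists n => /=.
Qed.

Lemma stopped_ge0 x : 0 <= stopped (E m) tau x.
Proof.
rewrite /stopped; case: (tau x) => [k|]; first exact: prodE_ge0.
by apply: limn_esup_ge0 => n; exact: prodE_ge0.
Qed.

Lemma Sk_meas k : measurable [set x | tau x = Some k].
Proof.
case: k => [|k].
  rewrite (_ : [set x | tau x = Some 0%N] = Ast tau 0); first exact: Ast_meas.
  apply/seteqP; split => x /=; first by move=> h; exists 0%N.
  by move=> [k [k0 h]]; move: k0; rewrite leqn0 => /eqP k0; rewrite -k0.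
rewrite (_ : [set x | tau x = Some k.+1] = Ast tau k.+1 `\` Ast tau k).
  by apply: measurableD; exact: Ast_meas.
apply/seteqP; split => x /=.
  move=> h; split; first by exists k.+1.
  by move=> [i [ik hi]]; move: hi; rewrite h => -[ei]; move: ik; rewrite -ei ltnn.
move=> [[i [ik hi]] hn]; rewrite hi; congr Some.
apply/eqP; rewrite eqn_leq ik /= ltnNge; apply/negP => ik'.
by apply: hn; exists i.
Qed.

Lemma N_meas : measurable [set x | tau x = None].
Proof.
rewrite (_ : [set x | tau x = None] = ~` \bigcup_k Ast tau k).
  by apply: measurableC; apply: bigcup_measurable => k _; exact: Ast_meas.
apply/seteqP; split => x /=.
  by move=> h [k _ [i [_ hi]]]; move: hi; rewrite h.
case ex: (tau x) => [k|] // h; exfalso; apply: h; exists k => //; exists k; split => //.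
Qed.

Lemma stopped_meas : measurable_fun setT (stopped (E m) tau).
Proof.
move=> _ B mB; rewrite setTI.
have mL : measurable_fun setT (fun x => limn_esup (fun n => E m n x)).
  by apply: measurable_fun_limn_esup => n; exact: prodE_meas.
rewrite (_ : stopped (E m) tau @^-1` B =
  ([set x | tau x = None] `&` ((fun x => limn_esup (fun n => E m n x)) @^-1` B)) `|`
  \bigcup_k ([set x | tau x = Some k] `&` (E m k @^-1` B))).
  apply: measurableU.
    apply: measurableI; first exact: N_meas.
    by have := mL measurableT B mB; rewrite setTI.
  apply: bigcup_measurable => k _; apply: measurableI; first exact: Sk_meas.
  by have := prodE_meas e me m k measurableT B mB; rewrite setTI.
apply/seteqP; split => x /=; rewrite /stopped.
  case ex: (tau x) => [k|] h; [right; exists k => //|left]; by split.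
move=> [[hN hL]|[k _ [hk hE]]]; first by rewrite hN; exact: hL.
by rewrite hk; exact: hE.
Qed.

Lemma part2 r : P (Ast tau r) = 1 ->
  \int[P]_x stopped (E m) tau x <= ((1 + dm m) ^+ r)%:E * \int[P]_x e m 0 x.
Proof.
move=> Pr.
have mN : measurable (~` Ast tau r) := measurableC (Ast_meas r).
have PN : P (~` Ast tau r) = 0.
  by rewrite probability_setC ?Pr ?subee//; exact: Ast_meas.
rewrite (ge0_negligible_integral mN measurableT stopped_meas (fun x _ => stopped_ge0 x) PN).
apply: le_trans (Sst_bound r).
rewrite [leRHS](ge0_negligible_integral mN measurableT (Sst_meas r) (fun x _ => Sst_ge0 m tau r x) PN).
rewrite le_eqVlt; apply/orP; left; apply/eqP/eq_integral => x; rewrite inE => -[_ /= hx].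
by move: hx => /contrapT [k [kr hk]]; rewrite /stopped /Sst hk kr.
Qed.

End tau.
End main3.


Theorem mainTheorem10 (d : measure_display) (T : measurableType d) (R : realType)
  (Pset : set (probability T R)) (e : nat -> nat -> T -> \bar R) (dm : nat -> R) :
  (forall m n, measurable_fun setT (e m n)) ->
  (forall m n x, 0 <= e m n x) ->
  (forall n, asymp_evar Pset (fun m => e m n)) ->
  (forall m, (0 <= dm m)%R) ->
  (forall m n (P : probability T R), Pset P ->
     forall g, is_cond_exp P (gen_filtration e m n) (e m n.+1) g ->
       {ae P, forall x, g x <= 1 + (dm m)%:E}) ->
  dm @ \oo --> 0%R ->
  asymp_supermart Pset (gen_filtration e) (prodE e) /\
  (forall r : nat -> nat, (fun m => (r m)%:R * dm m)%R @ \oo --> 0%R ->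
     r_asymp_eprocess Pset r (gen_filtration e) (prodE e)).
Proof.
move=> me e0 ev dm0 H5 hd.
have HPof (P : probability T R) (PP : Pset P) := fun m n g hg => H5 m n P PP g hg.
split.
- move=> n eps eps0.
  set del := Num.min 1%R (eps / (2 ^+ n * 2))%R.
  have del0 : (0 < del)%R by rewrite lt_min ltr01 /= divr_gt0// mulr_gt0// exprn_gt0.
  have hd1 : \forall m \near \oo, (dm m <= del)%R.
    near=> m.
    have : (`|0 - dm m| <= del)%R by near: m; exact: ((cvgrPdist_le _ _).1 hd del del0).
    by rewrite sub0r normrN ger0_norm.
  have hI := ev 0%N 1%R ltr01.
  near=> m => P PP.
  apply: (part1 e dm me e0 dm0 P (HPof P PP) m n eps).
  - apply: (le_trans (_ : dm m <= del)%R); last by rewrite ge_min lexx.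
    by near: m; exact: hd1.
  - suff h2 : \int[P]_x e m 0%N x <= 1 + 1%:E.
      by apply: (le_trans h2); rewrite -EFinD lee_fin; lra.
    by move: P PP; near: m; exact: hI.
  - have : (dm m <= eps / (2 ^+ n * 2))%R.
      apply: (le_trans (_ : dm m <= del)%R); last by rewrite ge_min lexx orbT.
      by near: m; exact: hd1.
    by rewrite ler_pdivlMr// mulr_gt0// exprn_gt0.
- move=> r hr tau htau eps eps0.
  set eta := (Num.min 1%R eps / 3)%R.
  have eta0 : (0 < eta)%R by rewrite divr_gt0// lt_min ltr01.
  have hI := ev 0%N eta eta0.
  have hexp := cvg_comp _ _ hr (@continuous_expR R 0%R).
  rewrite expR0 in hexp.
  have hE : \forall m \near \oo, (expR ((r m)%:R * dm m) <= 1 + eta)%R.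
    near=> m.
    have h : (`|1 - expR ((r m)%:R * dm m)| <= eta)%R.
      by near: m; exact: ((cvgrPdist_le _ _).1 hexp eta eta0).
    by rewrite -lerBlDl; apply: (le_trans _ h); rewrite distrC ler_norm.
  near=> m => P PP.
  have hI' : \int[P]_x e m 0%N x <= (1 + eta)%:E.
    by rewrite EFinD; move: P PP; near: m; exact: hI.
  have hE' : (expR ((r m)%:R * dm m) <= 1 + eta)%R by near: m.
  have [st bd] := htau m.
  have Pr := bd P PP.
  apply: le_trans (part2 e dm me e0 dm0 P (HPof P PP) m (tau m) st (r m) Pr) _.
  apply: le_trans (lee_wpmul2l _ hI') _; first by rewrite lee_fin exprn_ge0// addr_ge0.
  rewrite -EFinM -EFinD lee_fin.
  have c1 : ((1 + dm m) ^+ r m <= expR ((r m)%:R * dm m))%R.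
    rewrite expRM_natl; apply: lerXn2r; rewrite ?nnegrE ?addr_ge0 ?expR_ge0//.
    exact: expR_ge1Dx.
  have c2 : ((1 + dm m) ^+ r m * (1 + eta) <= (1 + eta) * (1 + eta))%R.
    by apply: ler_wpM2r; [rewrite addr_ge0// ltW|exact: le_trans c1 hE'].
  apply: le_trans c2 _.
  have a1 : (Num.min 1 eps <= 1)%R by rewrite ge_min lexx.
  have a2 : (Num.min 1 eps <= eps)%R by rewrite ge_min lexx orbT.
  have a0 : (0 < Num.min 1 eps)%R by rewrite lt_min ltr01.
  rewrite /eta; nra.
Unshelve. all: by end_near.
Qed.
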